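(* Let $n,k$ be integers with $2\le 2k\le n-4$. Let $\eta=(\eta_1<\dots<\eta_l)\in\overline{\mathbb{D}}^{\,\mathrm{o}}_{2k+2}$, where $\overline{\mathbb{D}}^{\,\mathrm{o}}_{2k+2}=\mathbb{D}^{\,\mathrm{o}}_{2k+2}\setminus\{(1,2k+1)\}$ if $2k=n-4$ and $\overline{\mathbb{D}}^{\,\mathrm{o}}_{2k+2}=\mathbb{D}^{\,\mathrm{o}}_{2k+2}$ otherwise. Let $Y_{\eta^*}$ be the Young diagram whose main diagonal consists of exactly the cells $c_{1,1},\dots,c_{l+1,l+1}$ and which satisfies $h_{1,1}=2n-5$, $h_{i,i}=\eta_{l-(i-2)}$ for $2\le i\le l+1$, and $a(c_{i,i})=l(c_{i,i})$ for $1\le i\le l+1$ (so $Y_{\eta^*}$ is self-conjugate). Let $\lambda$ be the partition associated with $Y_{\eta^*}$ (i.e. $\lambda=\mathbb{N}_0\setminus\mathrm{KN}^{-1}(Y_{\eta^*})$, equivalently the set of hook lengths of the first-column cells of $Y_{\eta^*}$). Then $\lambda$ is unrefinable. In particular $\lambda\in\overline{\mathcal{U}}_{T_{n,n-2k}}$.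
   Context: A partition of $N$ into distinct parts is a sequence $\lambda=(\lambda_1,\dots,\lambda_t)$ of positive integers with $\lambda_1<\dots<\lambda_t$, $\sum\lambda_i=N$ and $t\ge 2$, identified with its set of parts. $\mathbb{D}_N$ is the set of these, and $\mathbb{D}^{\,\mathrm{o}}_N$ the subset with all parts odd. Missing parts: $\mathcal{M}_\lambda=\{1,\dots,\lambda_t\}\setminus\{\lambda_1,\dots,\lambda_t\}$. $\lambda$ is refinable if there are two distinct missing parts $\mu<\mu'$ with $\mu+\mu'\in\lambda$, unrefinable otherwise; $\mathcal{U}_N$ is the set of unrefinable partitions of $N$. An element of $\mathcal{U}_N$ is maximal if its largest part equals the maximum of the largest parts of elements of $\mathcal{U}_N$; $\widetilde{\mathcal{U}}_N$ is the set of these and $\overline{\mathcal{U}}_N=\{\lambda\in\widetilde{\mathcal{U}}_N:\#\mathcal{M}_\lambda=\lfloor\lambda_t/2\rfloor\}$. $T_n=n(n+1)/2$ and $T_{n,d}=T_n-d$. Young diagrams are in English convention: rows $R_1,R_2,\dots$ top to bottom, columns $C_1,C_2,\dots$ left to right, $c_{i,j}$ the cell in row $i$, column $j$; arm $a(c_{i,j})$ = number of cells to its right in its row, leg $l(c_{i,j})$ = number of cells below it in its column, hook length $h_{i,j}=a+l+1$. A numerical set is $S\subseteq\mathbb{N}_0$ with $0\in S$ and finite complement. The Keith–Nath transformation sends $S$ to the Young diagram $\mathrm{KN}(S)$ whose boundary is the lattice path that, starting at the origin, takes for $j=0,1,\dots,\max(\mathbb{N}_0\setminus S)$ an east step if $j\in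 S$ and a north step otherwise; it is a bijection onto Young diagrams, and the hook lengths of the first-column cells of $\mathrm{KN}(S)$ are exactly the elements of $\mathbb{N}_0\setminus S$. *)

(* Defs.v *)
From mathcomp Require Import all_boot.
Set Implicit Arguments. Unset Strict Implicit. Unset Printing Implicit Defensive.

Definition distinct_partition (N : nat) (s : seq nat) : bool :=
  [&& sorted ltn s, all (fun x => 0 < x) s, sumn s == N & 2 <= size s].

Definition odd_distinct_partition (N : nat) (s : seq nat) : bool :=
  distinct_partition N s && all odd s.

Definition largest (s : seq nat) : nat := last 0 s.

Definition missing (s : seq nat) : seq nat :=
  [seq m <- iota 1 (largest s) | m \notin s].

Definition refinable (s : seq nat) : bool :=
  has (fun mu => has (fun mu' => (mu < mu') && (mu + mu' \in s)) (missing s))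
      (missing s).

Definition unrefinable (s : seq nat) : bool := ~~ refinable s.

Definition in_U (N : nat) (s : seq nat) : Prop :=
  distinct_partition N s /\ unrefinable s.

Definition in_Utilde (N : nat) (s : seq nat) : Prop :=
  in_U N s /\ forall s', in_U N s' -> largest s' <= largest s.

Definition in_Ubar (N : nat) (s : seq nat) : Prop :=
  in_Utilde N s /\ size (missing s) = (largest s)./2.

Definition T (n : nat) : nat := n * n.+1 %/ 2.
Definition Tnd (n d : nat) : nat := T n - d.

(* Y = [:: |R_1|; |R_2|; ...], nonincreasing positive row lengths *)
Definition young (Y : seq nat) : bool := sorted geq Y && all (fun x => 0 < x) Y.

(* 1-indexed row length of R_i and column length of C_j *)
Definition rowlen (Y : seq nat) (i : nat) : nat := nth 0 Y i.-1.
Definition collen (Y : seq nat) (j : nat) : nat := count (fun x => j <= x) Y.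

Definition in_diagram (Y : seq nat) (i j : nat) : bool :=
  [&& 1 <= i, i <= size Y, 1 <= j & j <= rowlen Y i].

Definition arm (Y : seq nat) (i j : nat) : nat := rowlen Y i - j.
Definition leg (Y : seq nat) (i j : nat) : nat := collen Y j - i.
Definition hook (Y : seq nat) (i j : nat) : nat := arm Y i j + leg Y i j + 1.

(* The partition associated with Y: the set of first-column hook lengths,
   listed increasingly (first-column hooks strictly decrease down the column). *)
Definition assoc_partition (Y : seq nat) : seq nat :=
  rev [seq hook Y i 1 | i <- iota 1 (size Y)].

(* Main.v *)
Require Import Defs.
From mathcomp Require Import all_boot zify.
Set Implicit Arguments. Unset Strict Implicit. Unset Printing Implicit Defensive.

Definition tri (t : nat) := \sum_(0 <= x < t) x.

Lemma triS t : tri t.+1 = tri t + t.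
Proof. by rewrite /tri big_nat_recr. Qed.

Lemma tri2 t : 2 * tri t = t * t.-1.
Proof.
elim: t => [|t IH]; first by rewrite /tri big_geq.
rewrite triS mulnDr IH. case: t {IH} => //= t. nia.
Qed.

Lemma tri_mono a b : a <= b -> tri a <= tri b.
Proof. by move=> h; rewrite /tri (@big_cat_nat _ _ _ a 0 b _ _ (leq0n a) h) leq_addr. Qed.

Lemma T2 n : 2 * T n = n * n.+1.
Proof.
rewrite /T mulnC divnK // dvdn2 oddM /=. by case: (odd n).
Qed.

Lemma sum_mem_range (s : seq nat) a b (F : nat -> nat) :
  uniq s -> (forall x, x \in s -> a <= x < b) ->
  \sum_(a <= x < b | x \in s) F x = \sum_(x <- s) F x.
Proof.
move=> us hs. rewrite -big_filter. apply: perm_big. apply: uniq_perm.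
- by rewrite filter_uniq // /index_iota iota_uniq.
- done.
move=> x; rewrite mem_filter mem_index_iota.
apply/andP/idP => [[]//|xs]. by split=> //; apply: hs.
Qed.

Lemma sum_addc (s : seq nat) c : \sum_(u <- s) (u + c) = sumn s + size s * c.
Proof. elim: s => [|a s IH]; first by rewrite big_nil. rewrite big_cons IH /=. lia. Qed.

Lemma sum_subc (s : seq nat) c : (forall u, u \in s -> u <= c) ->
  \sum_(u <- s) (c - u) + sumn s = size s * c.
Proof.
elim: s => [|a s IH] h; first by rewrite big_nil.
rewrite big_cons /=. have ha := h a (mem_head _ _).
have := IH (fun u hu => h u (@mem_behead _ (a :: s) u hu)). lia.
Qed.

Lemma mem_le_sumn (s : seq nat) x : x \in s -> x <= sumn s.
Proof.
elim: s => [|a s IH] //=; rewrite in_cons => /orP [/eqP->|/IH]; lia.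
Qed.

Lemma sumn_rem (s : seq nat) x : x \in s -> sumn s = x + sumn (rem x s).
Proof. by move=> h; rewrite (perm_sumn (perm_to_rem h)). Qed.

Lemma pair_le (s : seq nat) x y : uniq s -> x \in s -> y \in s -> x != y ->
  x + y <= sumn s.
Proof.
move=> us hx hy ne. rewrite (sumn_rem hx).
have : y \in rem x s by rewrite (mem_rem_uniq _ us) inE eq_sym ne.
move/mem_le_sumn. lia.
Qed.

Lemma triple_le (s : seq nat) x y z : uniq s -> x \in s -> y \in s -> z \in s ->
  x != y -> x != z -> y != z -> x + y + z <= sumn s.
Proof.
move=> us hx hy hz nxy nxz nyz. rewrite (sumn_rem hx).
have hy' : y \in rem x s by rewrite (mem_rem_uniq _ us) inE eq_sym nxy.
have hz' : z \in rem x s by rewrite (mem_rem_uniq _ us) inE eq_sym nxz.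
have := pair_le (rem_uniq x us) hy' hz' nyz. lia.
Qed.

Lemma sorted_map_iota (e : rel nat) (h : nat -> nat) a k :
  (forall i, a <= i -> i.+1 < a + k -> e (h i) (h i.+1)) ->
  sorted e (map h (iota a k)).
Proof.
elim: k a => [|k IH] a H //=.
case: k IH H => [|k] IH H //=.
apply/andP; split; first by apply: H; lia.
have := IH a.+1 (fun i h1 h2 => H i (ltnW h1) ltac:(lia)). by [].
Qed.

Lemma path_last_max a (s : seq nat) : path ltn a s -> forall x, x \in a :: s -> x <= last a s.
Proof.
elim: s a => [|b s IH] a /=.
  by move=> _ x; rewrite inE => /eqP->.
move=> /andP [ab hp] x; rewrite in_cons => /orP [/eqP->|hx].
  have := IH b hp b (mem_head _ _). lia.
by apply: IH.
Qed.

Lemma dp_facts N s : distinct_partition N s ->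
  [/\ uniq s, largest s \in s, (forall x, x \in s -> x <= largest s) & sumn s = N].
Proof.
case/and4P => srt pos /eqP sN sz.
split => //.
- exact: (sorted_uniq ltn_trans ltnn srt).
- case: s srt pos sN sz => [|a s] //= _ _ _ _. exact: mem_last.
- case: s srt pos sN sz => [|a s] //= srt _ _ _. exact: path_last_max.
Qed.

Lemma pair_fact N s : distinct_partition N s -> unrefinable s ->
  forall mu, 0 < mu -> mu.*2 < largest s -> (mu \in s) || (largest s - mu \in s).
Proof.
move=> dp hu mu h0 h1. case/dp_facts: dp => _ hl _ _.
apply/negPn/negP => /norP [n1 n2]. move/negP: hu; apply.
apply/hasP; exists mu.
  rewrite /missing mem_filter n1 mem_iota /=. lia.
apply/hasP; exists (largest s - mu).
  rewrite /missing mem_filter n2 mem_iota /=. lia.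
apply/andP; split; first lia.
by rewrite subnKC //; lia.
Qed.

Definition Gf (f : nat -> nat) m j := \sum_(j <= x < (m - j).+1) f x.

Lemma G_rec f m j : j.*2 < m -> Gf f m j = f j + f (m - j) + Gf f m j.+1.
Proof.
move=> h. rewrite /Gf big_ltn; last lia.
have E : (m - j).+1 = (m - j.+1).+1.+1 by lia.
rewrite E big_nat_recr /=; last lia.
have E2 : (m - j.+1).+1 = m - j by lia.
rewrite E2. lia.
Qed.

Lemma caseA f m : (forall x, f x = 0 \/ f x = x) ->
  (forall j, 0 < j -> j.*2 < m -> 0 < f j + f (m - j)) ->
  forall j, 0 < j -> tri (m.+1)./2 <= Gf f m j + tri j.
Proof.
move=> hf hp.
suff H : forall t j, m - j.*2 <= t -> 0 < j -> tri (m.+1)./2 <= Gf f m j + tri j.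
  by move=> j; apply: (H (m - j.*2)).
elim=> [|t IH] j ht hj.
  have : tri (m.+1)./2 <= tri j by apply: tri_mono; lia. lia.
case: (ltnP (j.*2) m) => hm; last first.
  have : tri (m.+1)./2 <= tri j by apply: tri_mono; lia. lia.
rewrite G_rec //. have := IH j.+1 ltac:(lia) ltac:(lia). rewrite triS.
have := hp j hj hm. case: (hf j); case: (hf (m - j)); lia.
Qed.

Lemma caseB f p : (forall x, f x = 0 \/ f x = x) ->
  (forall j, 0 < j -> j.*2 < p.*2 -> 0 < f j + f (p.*2 - j)) ->
  forall j, 0 < j -> j <= p ->
  tri p <= Gf f p.*2 j + tri j /\
  (Gf f p.*2 j + tri j < tri p + p -> exists t, Gf f p.*2 j + tri j = tri p + t.*2).
Proof.
move=> hf hp.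
suff H : forall t j, p - j <= t -> 0 < j -> j <= p -> tri p <= Gf f p.*2 j + tri j /\
  (Gf f p.*2 j + tri j < tri p + p -> exists t, Gf f p.*2 j + tri j = tri p + t.*2).
  by move=> j; apply: (H (p - j)).
elim=> [|t IH] j ht hj hjp.
  have -> : j = p by lia.
  rewrite /Gf. have -> : p.*2 - p = p by lia. rewrite big_nat1.
  case: (hf p) => ->; split; try lia. by exists 0; lia.
case: (ltnP j p) => hjp'; last first.
  have ej : j = p by lia. subst j.
  rewrite /Gf. have -> : p.*2 - p = p by lia. rewrite big_nat1.
  case: (hf p) => ->; split; try lia. by exists 0; lia.
have [IH1 IH2] := IH j.+1 ltac:(lia) ltac:(lia) ltac:(lia).
rewrite triS in IH1 IH2.
have hm : j.*2 < p.*2 by lia.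
rewrite G_rec //. have := hp j hj hm.
case: (hf j) => e1; case: (hf (p.*2 - j)) => e2; rewrite e1 e2 => hpos.
- lia.
- split; first lia. move=> hlt. case: IH2; first lia.
  move=> t0 ht0. exists (t0 + (p - j)). lia.
- split; first lia. move=> hlt. case: IH2; first lia.
  move=> t0 ht0. exists t0. lia.
- split; first lia. move=> hlt. lia.
Qed.

Lemma maxU n k N s : 2 <= 2 * k -> 2 * k <= n - 4 -> N = Tnd n (n - 2 * k) ->
  in_U N s -> largest s <= 2 * n - 5.
Proof.
move=> hk1 hk2 hN [dp hu].
have [us hl hle sN] := dp_facts dp.
set m := largest s in hl hle *.
pose f x := if x \in s then x else 0.
have hf : forall x, f x = 0 \/ f x = x by move=> x; rewrite /f; case: ifP; auto.
have hp : forall j, 0 < j -> j.*2 < m -> 0 < f j + f (m - j).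
  move=> j h0 h1. have := pair_fact dp hu h0 h1. rewrite /f -/m.
  case: (j \in s); case: (m - j \in s) => //=; lia.
have hm0 : 0 < m.
  case/and4P: (dp) => _ pos _ _. exact: (allP pos) m hl.
have hsum : N = Gf f m 1 + m.
  rewrite -sN sumnE -(@sum_mem_range s 0 m.+1 (fun x => x) us); last first.
    move=> x hx. have := hle x hx. lia.
  rewrite big_mkcond /= big_ltn // big_nat_recr //= /Gf.
  have -> : (m - 1).+1 = m by lia.
  rewrite -/(f m) /f hl. case: (0 \in s); rewrite /=; lia.
have T2n := T2 n.
have hT : n - 2 * k <= T n by nia.
rewrite /Tnd in hN.
case: (leqP m (2 * n - 5)) => // hbig.
have t1 : tri 1 = 0 by rewrite /tri big_nat1.
case: (leqP (2 * n - 3) m) => hA.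
  have := caseA hf hp (j:=1) isT. rewrite t1 addn0.
  have : tri (n - 1) <= tri (m.+1)./2 by apply: tri_mono; lia.
  have := tri2 (n - 1).
  have e1 : (n-1)*(n-1).-1 + 4 * n = n * n.+1 + 2.
    have [q eq] : exists q, n = q + 6 by exists (n-6); lia.
    rewrite eq. have -> : q + 6 - 1 = q.+4.+1 by lia. rewrite /=. nia.
  lia.
have em : m = (n - 2).*2 by lia.
have hp' : forall j, 0 < j -> j.*2 < (n-2).*2 -> 0 < f j + f ((n-2).*2 - j).
  by rewrite -em.
have [_ H2] := caseB hf hp' (j:=1) isT ltac:(lia).
rewrite -em t1 addn0 in H2.
have := tri2 (n - 2).
have e1 : (n-2)*(n-2).-1 + 6 * n = n * n.+1 + 6.
  have [q eq] : exists q, n = q + 6 by exists (n-6); lia.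
  rewrite eq. have -> : q + 6 - 2 = q.+4 by lia. rewrite /=. nia.
move=> e2.
case: H2. lia. move=> t ht. lia.
Qed.

Lemma geq_trans' : transitive geq.
Proof. move=> a b c h1 h2. exact: leq_trans h2 h1. Qed.

Lemma count_nth (Y : seq nat) j i : sorted geq Y -> 0 < j ->
  (i < count (fun x => j <= x) Y) = (j <= nth 0 Y i).
Proof.
elim: Y i => [|a Y IH] i srt hj /=.
  by rewrite nth_nil; case: j hj.
have srtY : sorted geq Y := path_sorted srt.
have hall : all (geq a) Y := order_path_min geq_trans' srt.
case: (leqP j a) => hja /=.
  case: i => [|i] /=; first by rewrite hja.
  by rewrite add1n ltnS IH.
have c0 : count (fun x => j <= x) Y = 0.
  rewrite (eq_in_count (a2 := pred0)) ?count_pred0 // => x hx /=.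
  have := (allP hall) x hx. rewrite /=. lia.
rewrite c0.
case: i => [|i] /=; first lia.
case: (ltnP i (size Y)) => hi.
  have := (allP hall) _ (mem_nth 0 hi). rewrite /=. lia.
rewrite nth_default //. lia.
Qed.

Lemma rfacts (Y : seq nat) : young Y ->
 [/\ (forall i, 1 <= i <= size Y -> 0 < rowlen Y i),
     (forall i j, 1 <= i <= j -> j <= size Y -> rowlen Y j <= rowlen Y i),
     (forall i, size Y < i -> rowlen Y i = 0),
     (collen Y 1 = size Y) &
     (forall i j, 1 <= i -> 1 <= j -> (i <= collen Y j) = (j <= rowlen Y i))].
Proof.
case/andP => srt pos. split.
- move=> [|i] // /andP [_ hi]. rewrite /rowlen. apply: (allP pos). exact: mem_nth.
- move=> i j hij hj. rewrite /rowlen.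
  have := sorted_leq_nth geq_trans' (leqnn) 0 srt.
  move=> /(_ i.-1 j.-1). rewrite !inE. apply.
  + case: i hij => // i /andP [_ h] /=. exact: leq_trans h hj.
  + case: j hj hij => [|j] hj hij; first by move: hij; case: i => // ? /andP [].
    exact: hj.
  + case: i hij => // i /andP [_ h]. case: j h hj => [|j] h _ //=.
- move=> i hi. rewrite /rowlen nth_default //. lia.
- apply/eqP. rewrite /collen -all_count. exact: pos.
- move=> [|i] j // _ hj. rewrite /rowlen /collen /=. exact: count_nth.
Qed.

Lemma young_mem (Y : seq nat) D : young Y -> 1 <= D <= size Y -> D <= rowlen Y D ->
  (D.+1 <= size Y -> rowlen Y D.+1 < D.+1) ->
  (forall j, 1 <= j <= D -> rowlen Y j - j = collen Y j - j) ->
  forall x, (x \in [seq hook Y i 1 | i <- iota 1 (size Y)]) =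
    if size Y <= x then (x - size Y \in [seq rowlen Y j - j | j <- iota 1 D])
    else (size Y).-1 - x \notin [seq rowlen Y j - j | j <- iota 1 D].
Proof.
move=> yY hD hDD hD1 hac x.
have [rpos rmono rzero c1 cnt] := rfacts yY.
have hh : forall i, 1 <= i <= size Y -> hook Y i 1 = rowlen Y i + size Y - i.
  move=> i hi. rewrite /hook /arm /leg c1. have := rpos i hi. lia.
have rjj : forall j, 1 <= j <= D -> j <= rowlen Y j.
  move=> j hj. have := rmono j D ltac:(lia) ltac:(lia). lia.
have rc : forall j, 1 <= j <= D -> rowlen Y j = collen Y j.
  move=> j hj. have h1 := hac j hj.
  have h2 : j <= collen Y j by rewrite cnt; [apply: rjj|lia|lia].
  have := rjj j hj. lia.
have rL : forall j, 1 <= j <= D -> rowlen Y j <= size Y.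
  move=> j hj. rewrite rc // /collen. exact: count_size.
have rlow : forall i, D < i <= size Y -> rowlen Y i <= D.
  move=> i hi. have := rmono D.+1 i ltac:(lia) ltac:(lia). have := hD1 ltac:(lia). lia.
set L := size Y in hD hD1 rpos rmono rzero c1 hh rL rlow *.
set U := [seq rowlen Y j - j | j <- iota 1 D].
set A := [seq hook Y i 1 | i <- iota D.+1 (L - D)].
set C := [seq L.-1 - u | u <- U].
have hDL : D <= L by lia.
have eiota : iota 1 L = iota 1 D ++ iota D.+1 (L - D).
  by rewrite -{1}(subnKC hDL) iotaD add1n.
have Ule : forall u, u \in U -> u <= L.-1.
  move=> u /mapP [j hj ->]. rewrite mem_iota in hj. have := rjj j; have := rL j. lia.
have memB0 : forall y, (y \in [seq hook Y i 1 | i <- iota 1 D]) = (L <= y) && (y - L \in U).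
  move=> y; apply/mapP/andP => [[i hi ->]|[hy /mapP [j hj ey]]].
  - rewrite mem_iota in hi. rewrite hh; last lia. have := rjj i ltac:(lia). split; first lia.
    apply/mapP; exists i; [by rewrite mem_iota | lia].
  - exists j => //. rewrite mem_iota in hj. rewrite hh; last lia. have := rjj j ltac:(lia). lia.
have Alt : forall y, y \in A -> y < L.
  move=> y /mapP [i hi ->]. rewrite mem_iota in hi. rewrite hh; last lia.
  have := rlow i ltac:(lia). have := rpos i ltac:(lia). lia.
have uA : uniq A.
  apply: (sorted_uniq (leT := fun a b => b < a)).
  - move=> a b c h1 h2. exact: ltn_trans h2 h1.
  - move=> a. exact: ltnn.
  apply: sorted_map_iota => i h1 h2. rewrite !hh; try lia.
  have := rmono i i.+1 ltac:(lia) ltac:(lia). have := rpos i.+1 ltac:(lia). lia.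
have CE : C = [seq L.-1 - (rowlen Y j - j) | j <- iota 1 D] by rewrite /C /U -map_comp.
have uC : uniq C.
  rewrite CE. apply: (sorted_uniq ltn_trans ltnn). apply: sorted_map_iota => j h1 h2.
  have := rjj j ltac:(lia). have := rjj j.+1 ltac:(lia).
  have := rmono j j.+1 ltac:(lia) ltac:(lia). have := rL j ltac:(lia). lia.
have Clt : forall y, y \in C -> y < L.
  move=> y /mapP [u hu ->]. have := Ule u hu. lia.
have disj : forall y, y \in A -> y \notin C.
  move=> y /mapP [i hi ->]. rewrite CE. apply/mapP => [[j hj]].
  rewrite mem_iota in hi. rewrite mem_iota in hj. rewrite hh; last lia. move=> E.
  have := rlow i ltac:(lia). have := rpos i ltac:(lia). have := rjj j ltac:(lia).
  have := rc j ltac:(lia). have := rL j ltac:(lia).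
  have := cnt i j ltac:(lia) ltac:(lia).
  case: (leqP j (rowlen Y i)) => hji.
    move=> /idP. lia.
  move/negbT. rewrite -ltnNge. lia.
have cover : forall y, y < L -> (y \in A) || (y \in C).
  have hU : uniq (A ++ C).
    rewrite cat_uniq uA uC /= andbT. apply/hasPn => y yC. apply/negP => yA.
    by have := disj y yA; rewrite yC.
  have hS : {subset A ++ C <= iota 0 L}.
    move=> y; rewrite mem_cat mem_iota => /orP [/Alt|/Clt]; lia.
  have hsz : size (iota 0 L) <= size (A ++ C).
    rewrite size_cat /A /C !size_map !size_iota. lia.
  have [_ eqm] := uniq_min_size hU hS hsz.
  move=> y hy. have : y \in iota 0 L by rewrite mem_iota.
  by rewrite -eqm mem_cat.
rewrite eiota map_cat mem_cat memB0 -/A. case: (leqP L x) => hx /=.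
  have : x \notin A by apply/negP => /Alt; lia.
  by move/negbTE->; rewrite orbF.
have memC : (x \in C) = (L.-1 - x \in U).
  apply/mapP/idP => [[u hu ->]| hu].
    have := Ule u hu. move=> hle. by rewrite subKn //.
  exists (L.-1 - x) => //. lia.
rewrite -memC. case hA: (x \in A).
  have := disj x hA. by case: (x \in C).
have := cover x hx. rewrite hA /=. by move->.
Qed.

Definition Pl (L : nat) (Ue : seq nat) (x : nat) : bool :=
  if L <= x then (x - L == L.-1) || (x - L \in Ue)
  else (0 < x) && (L.-1 - x \notin Ue).

Definition Lam L Ue := [seq x <- iota 0 L.*2 | Pl L Ue x].

Lemma Lam_props L Ue k :
  4 <= L -> uniq Ue -> (forall u, u \in Ue -> u <= k) -> 1 <= k -> k.*2 <= L - 2 ->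
  (forall u v, u \in Ue -> v \in Ue -> u != v -> u + v <= k) ->
  (forall u v w, u \in Ue -> v \in Ue -> w \in Ue -> u != v -> u != w -> v != w ->
     u + v + w <= k) ->
  (k.*2 = L - 2 -> forall u v, u \in Ue -> v \in Ue -> u = k -> v = 0 -> False) ->
  unrefinable (Lam L Ue) /\ sorted ltn (Lam L Ue) /\ all (fun x => 0 < x) (Lam L Ue) /\
      size (Lam L Ue) = L /\ largest (Lam L Ue) = L.*2.-1 /\
      size (missing (Lam L Ue)) = L.-1 /\
      sumn (Lam L Ue) = tri L + (sumn Ue).*2 + size Ue + L.*2.-1.
Proof.
move=> hL uU hUk hk1 hk2 hpair htrip hext.
set P := Pl L Ue.
have notL1 : L.-1 \notin Ue by apply/negP => /hUk; lia.
have Plt : forall x, P x -> x < L.*2.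
  move=> x. rewrite /P /Pl. case: (leqP L x) => hx //.
  case/orP => [/eqP|/hUk]; lia.
  move=> _; lia.
have memL : forall x, (x \in Lam L Ue) = P x.
  move=> x. rewrite /Lam mem_filter mem_iota /=. apply/andP/idP => [[]//|h].
  split => //. have := Plt x h. lia.
have P0 : P 0 = false by rewrite /P /Pl; case: ifP => //; lia.
have Pm : P L.*2.-1 = true.
  rewrite /P /Pl. have -> : (L <= L.*2.-1) = true by lia.
  have -> : (L.*2.-1 - L == L.-1) = true by apply/eqP; lia. done.
have anti : forall x, x < L.*2 -> P (L.*2.-1 - x) = ~~ P x.
  move=> x hx. rewrite /P /Pl. case: (leqP L x) => hLx.
    have -> : (L <= L.*2.-1 - x) = false by lia.
    have -> : L.-1 - (L.*2.-1 - x) = x - L by lia.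
    have -> : (0 < L.*2.-1 - x) = (x - L != L.-1) by apply/idP/idP; lia.
    by rewrite negb_or.
  have -> : (L <= L.*2.-1 - x) = true by lia.
  have -> : L.*2.-1 - x - L = L.-1 - x by lia.
  have -> : (L.-1 - x == L.-1) = ~~ (0 < x) by apply/idP/idP; lia.
  by rewrite negb_and negbK.
have ei : iota 0 L.*2 = index_iota 0 L.*2 by rewrite /index_iota subn0.
have cntP : count P (iota 0 L.*2) = count (predC P) (iota 0 L.*2).
  rewrite -!sum1_count ei big_nat_rev big_mkcond [in RHS]big_mkcond /=.
  apply: eq_big_nat => i hi. rewrite add0n.
  have -> : L.*2 - i.+1 = L.*2.-1 - i by lia.
  by rewrite anti //; lia.
have cnt : count P (iota 0 L.*2) = L.
  have := count_predC P (iota 0 L.*2). rewrite size_iota cntP. lia.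
have szL : size (Lam L Ue) = L by rewrite /Lam size_filter.
have lastL : largest (Lam L Ue) = L.*2.-1.
  have e : iota 0 L.*2 = rcons (iota 0 L.*2.-1) L.*2.-1.
    rewrite -cats1. have {1}-> : L.*2 = L.*2.-1 + 1 by lia. by rewrite iotaD.
  by rewrite /largest /Lam e filter_rcons -/P Pm last_rcons.
have missE : forall a, (a \in missing (Lam L Ue)) = [&& 1 <= a, a < L.*2 & ~~ P a].
  move=> a. rewrite /missing mem_filter mem_iota lastL memL.
  apply/andP/and3P => [[h1 /andP [h2 h3]]|[h1 h2 h3]]; split => //; try lia.
split; last split; last split; last split; last split; last split.
-
  apply/hasPn => a; rewrite missE => /and3P [ha1 ha2 hPa].
  apply/hasPn => b; rewrite missE => /and3P [hb1 hb2 hPb].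
  apply/negP => /andP [hab]. rewrite memL => hPab.
  have habL := Plt _ hPab.
  move: hPa hPb hPab. rewrite /P /Pl.
  case: (leqP L a) => ha; case: (leqP L b) => hb; case: (leqP L (a + b)) => hs;
    try (move=> *; lia).
  + (* a < L <= b *)
    have -> : (0 < a) = true by lia. rewrite /= negbK => hu.
    rewrite negb_or => /andP [hb1' hb2'].
    case/orP => [/eqP e|hw].
      have e' : b - L = L.-1 - a by lia. by rewrite e' hu in hb2'.
    case: (eqVneq (a + b - L) (L.-1 - a)) => e1.
      have := hUk _ hu. lia.
    have := hpair _ _ hw hu e1. lia.
  + (* a < L, b < L, L <= a+b *)
    have -> : (0 < a) = true by lia. have -> : (0 < b) = true by lia.
    rewrite /= !negbK => hu hv.
    have hne : L.-1 - a != L.-1 - b by apply/eqP; lia.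
    have huv := hpair _ _ hu hv hne.
    have -> : (a + b - L == L.-1) = false by apply/negbTE/eqP; lia.
    move=> /= hw.
    case: (eqVneq (a + b - L) (L.-1 - a)) => e1.
      have hk := hUk _ hu. apply: (hext _ _ _ hu hv); lia.
    case: (eqVneq (a + b - L) (L.-1 - b)) => e2.
      have hk := hUk _ hv. apply: (hext _ _ _ hv hu); lia.
    have := htrip _ _ _ hu hv hw hne. rewrite eq_sym e1 eq_sym e2. move=> /(_ isT isT). lia.
  + (* a < L, b < L, a + b < L *)
    have -> : (0 < a) = true by lia. have -> : (0 < b) = true by lia.
    rewrite /= !negbK => hu hv _.
    have hne : L.-1 - a != L.-1 - b by apply/eqP; lia.
    have := hpair _ _ hu hv hne. lia.
- by rewrite /Lam; apply: sorted_filter; [exact: ltn_trans | exact: iota_ltn_sorted].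
- apply/allP => x. rewrite memL /P /Pl. case: (leqP L x) => hx; first by move=> _; lia.
  by case/andP.
- exact: szL.
- exact: lastL.
-
  rewrite /missing size_filter lastL.
  rewrite (eq_in_count (a2 := predC P)); last first.
    by move=> x hx; rewrite memL.
  pose m1 := L.*2.-1.
  have E : L.*2 = m1.+1 by rewrite /m1; lia.
  have := count_predC P (iota 0 L.*2). rewrite size_iota cnt E /= P0 /=. lia.
-
  rewrite /Lam sumnE big_filter ei -/P.
  have hsplit : \sum_(0 <= x < L.*2 | P x) x =
      \sum_(0 <= x < L | P x) x + \sum_(L <= x < L.*2 | P x) x.
    by rewrite (@big_cat_nat _ _ _ L 0 L.*2) //; lia.
  rewrite hsplit.
  have up : \sum_(L <= x < L.*2 | P x) x = \sum_(0 <= i < L.*2 - L | P (i + L)) (i + L)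
    := big_addn 0 L.*2 L P (fun x => x).
  rewrite up.
  have -> : L.*2 - L = L by lia.
  have up2 : \sum_(0 <= i < L | P (i + L)) (i + L) = \sum_(0 <= i < L | i \in L.-1 :: Ue) (i + L).
    rewrite big_mkcond [in RHS]big_mkcond /=. apply: eq_big_nat => i hi.
    rewrite /P /Pl. have -> : (L <= i + L) = true by lia. have -> : i + L - L = i by lia.
    by rewrite in_cons.
  rewrite up2 sum_mem_range; last first.
    move=> x; rewrite in_cons => /orP [/eqP ->|/hUk]; lia.
    by rewrite cons_uniq notL1 uU.
  rewrite big_cons sum_addc.
  have low : \sum_(0 <= x < L) x = \sum_(0 <= x < L | P x) x + \sum_(0 <= x < L | ~~ P x) x.
    by rewrite (bigID P).
  have lowR : \sum_(0 <= x < L | ~~ P x) x = \sum_(u <- Ue) (L.-1 - u).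
    rewrite big_nat_rev.
    have -> : \sum_(0 <= i < L | ~~ P (0 + L - i.+1)) (0 + L - i.+1)
            = \sum_(0 <= i < L | i \in Ue) (L.-1 - i).
      rewrite big_mkcond [in RHS]big_mkcond /=. apply: eq_big_nat => i hi.
      rewrite add0n. have e3 : L - i.+1 = L.-1 - i by lia. rewrite e3.
      rewrite /P /Pl. have -> : (L <= L.-1 - i) = false by lia.
      have -> : L.-1 - (L.-1 - i) = i by lia.
      case: (eqVneq i L.-1) => ei1.
        rewrite ei1 (negbTE notL1) /=. case: ifP => _; lia.
      have -> : (0 < L.-1 - i) = true by lia.
      by rewrite /= negbK.
    apply: sum_mem_range => // x hx. have := hUk _ hx. lia.
  have hkL : k <= L.-1 by lia.
  have hsub := sum_subc (c := L.-1) (s := Ue) (fun u hu => leq_trans (hUk u hu) hkL).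
  rewrite /tri.
  have e4 : size Ue * L = size Ue * L.-1 + size Ue.
    rewrite -mulnSr prednK //. lia.
  move: low lowR hsub e4.
  set a1 := \sum_(0 <= x < L | P x) x.
  set a2 := \sum_(0 <= x < L | ~~ P x) x.
  set a3 := \sum_(0 <= x < L) x.
  set a4 := \sum_(u <- Ue) (L.-1 - u).
  set s1 := sumn Ue. set s2 := size Ue.
  lia.
Qed.

Lemma tri_n2 n : 6 <= n -> 2 * tri (n - 2) + 6 * n = n * n.+1 + 6.
Proof.
move=> hn. rewrite tri2.
have [q eq] : exists q, n = q + 6 by exists (n-6); lia.
rewrite eq. have -> : q + 6 - 2 = q.+4 by lia. rewrite /=. nia.
Qed.

Lemma sumn_odd (s : seq nat) : all odd s -> sumn s = (sumn (map half s)).*2 + size s.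
Proof.
elim: s => [|a s IH] //= /andP [oa os]. rewrite IH // doubleD.
have := odd_double_half a. rewrite oa. lia.
Qed.

Lemma half_inj_odd a b : odd a -> odd b -> a./2 = b./2 -> a = b.
Proof.
move=> oa ob e. have := odd_double_half a. have := odd_double_half b.
rewrite oa ob e. lia.
Qed.

Lemma memLam L Ue x : 1 <= L -> (forall u, u \in Ue -> u < L.-1) ->
  (x \in Lam L Ue) = Pl L Ue x.
Proof.
move=> hL hU. rewrite /Lam mem_filter mem_iota /=.
apply/andP/idP => [[]//|h]; split => //. move: h; rewrite /Pl.
case: (leqP L x) => hx; last lia.
case/orP => [/eqP|/hU]; lia.
Qed.

Lemma assoc_sorted Y : young Y -> sorted ltn (assoc_partition Y).
Proof.
move=> yY. have [rpos rmono _ c1 _] := rfacts yY.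
rewrite /assoc_partition rev_sorted. apply: sorted_map_iota => i h1 h2.
rewrite /hook /arm /leg c1. have := rpos i.+1 ltac:(lia). have := rpos i ltac:(lia).
have := rmono i i.+1 ltac:(lia) ltac:(lia). lia.
Qed.

Lemma final_arith n k L s1 s2 : 6 <= n -> 2 * k <= n - 4 -> L = n - 2 ->
  s1.*2 + s2 = 2 * k + 2 -> tri L + s1.*2 + s2 + L.*2.-1 = Tnd n (n - 2 * k).
Proof.
move=> hn hk -> hs. have := tri_n2 hn. have := T2 n. rewrite /Tnd. lia.
Qed.

Lemma size2 (s : seq nat) : size s = 2 -> exists a b, s = [:: a; b].
Proof. case: s => [|a [|b [|c t]]] // _. by exists a, b. Qed.

Unset Implicit Arguments.

Theorem theorem4p15 (n k : nat) (eta Y : seq nat) :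
  2 <= 2 * k -> 2 * k <= n - 4 ->
  (* eta \in D-bar^o_{2k+2} *)
  odd_distinct_partition (2 * k + 2) eta ->
  (2 * k = n - 4 -> eta <> [:: 1; 2 * k + 1]) ->
  (* Y = Y_{eta*} *)
  young Y ->
  in_diagram Y (size eta).+1 (size eta).+1 ->
  ~~ in_diagram Y (size eta).+2 (size eta).+2 ->
  hook Y 1 1 = 2 * n - 5 ->
  (forall i, 2 <= i <= (size eta).+1 ->
     hook Y i i = nth 0 eta ((size eta).+1 - i)) ->
  (forall i, 1 <= i <= (size eta).+1 -> arm Y i i = leg Y i i) ->
  unrefinable (assoc_partition Y) /\
  in_Ubar (Tnd n (n - 2 * k)) (assoc_partition Y).
Proof.
move=> hk1 hk2 hodp hex yY hin hnin hh11 hhii hac.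
have [rpos rmono rzero c1 cnt] := rfacts yY.
set l := size eta in hin hnin hhii hac.
set D := l.+1 in hin hnin hhii hac.
case/and4P: hin => _ hDL _ hDD.
have hD1 : D.+1 <= size Y -> rowlen Y D.+1 < D.+1.
  move=> h. apply: contraNT hnin. rewrite -leqNgt => h2. by rewrite /in_diagram h h2.
have hac' : forall j, 1 <= j <= D -> rowlen Y j - j = collen Y j - j := hac.
have r1 : rowlen Y 1 = size Y.
  have := hac' 1 isT. rewrite c1. have := rpos 1 ltac:(lia). lia.
have hn6 : 6 <= n by lia.
have hL : size Y = n - 2.
  move: hh11. rewrite /hook /arm /leg r1 c1. lia.
have hjj : forall j, 2 <= j <= D -> rowlen Y j - j = (nth 0 eta (D - j))./2.
  move=> j hj. have e1 := hhii j hj. have e2 := hac j ltac:(lia). move: e1 e2.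
  rewrite /hook /arm /leg. lia.
move: hodp; rewrite /odd_distinct_partition /distinct_partition.
case/andP => /and4P [srt epos /eqP esum esz] eodd.
have esz' : 1 < l := esz.
have ueta : uniq eta := sorted_uniq ltn_trans ltnn srt.
set Ue := map half eta.
have uU : uniq Ue.
  rewrite map_inj_in_uniq // => a b ha hb. apply: half_inj_odd.
  exact: (allP eodd a ha). exact: (allP eodd b hb).
have hsig : (sumn Ue).*2 + l = 2 * k + 2 by rewrite -esum (sumn_odd eodd).
have szU : size Ue = l by rewrite size_map.
have hUk : forall u, u \in Ue -> u <= k.
  move=> u hu. have := mem_le_sumn hu. lia.
have hpair : forall u v, u \in Ue -> v \in Ue -> u != v -> u + v <= k.
  move=> u v hu hv ne. have := pair_le uU hu hv ne. lia.
have htrip : forall u v w, u \in Ue -> v \in Ue -> w \in Ue -> u != v -> u != w -> v != w ->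
     u + v + w <= k.
  move=> u v w hu hv hw n1 n2 n3. have := triple_le uU hu hv hw n1 n2 n3. lia.
have hext : k.*2 = (n - 2) - 2 -> forall u v, u \in Ue -> v \in Ue -> u = k -> v = 0 -> False.
  move=> hkn u v hu hv eu ev.
  have ne : u != v by apply/eqP; lia.
  have := pair_le uU hu hv ne. move=> hs.
  have l2 : l = 2 by lia.
  have [a [b eab]] := size2 l2.
  move: hu hv srt eodd hex. rewrite /Ue eab /=.
  rewrite !inE => hu hv /andP [hab _] /and3P [oa ob _] hex'.
  have ha := odd_double_half a. have hb := odd_double_half b. rewrite oa ob in ha hb.
  apply: (hex' ltac:(lia)).
  have hab2 : a./2 <= b./2 by lia.
  case/orP: hu => /eqP hu; case/orP: hv => /eqP hv; try lia.
  have ea : a = 1 by lia. have eb : b = 2 * k + 1 by lia. by rewrite ea eb.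

have Umem : forall y, (y \in [seq rowlen Y j - j | j <- iota 1 D]) = (y == (size Y).-1) || (y \in Ue).
  move=> y. apply/mapP/orP.
    move=> [j0 hj ->]. rewrite mem_iota in hj.
    case: (eqVneq j0 1) => ej.
      left. rewrite ej r1. apply/eqP. lia.
    right. rewrite hjj; last lia. apply: map_f. apply: mem_nth. change (D - j0 < l). rewrite /D in hj *. lia.
  move=> [/eqP ->|/mapP [e he ->]].
    exists 1; first by rewrite mem_iota; lia.
    rewrite r1. lia.
  have ht : index e eta < l by rewrite /l index_mem.
  exists (D - index e eta).
    rewrite mem_iota. rewrite /D. lia.
  rewrite hjj; last (rewrite /D; lia).
  have -> : D - (D - index e eta) = index e eta by rewrite /D; lia.
  by rewrite nth_index.
have memA : forall x, (x \in assoc_partition Y) = Pl (size Y) Ue x.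
  move=> x. rewrite /assoc_partition mem_rev (@young_mem Y D yY ltac:(lia) hDD hD1 hac').
  rewrite /Pl. case: (leqP (size Y) x) => hx; first by rewrite Umem.
  rewrite Umem negb_or. congr (_ && _). apply/idP/idP; lia.
have hL4 : 4 <= (size Y) by lia.
have [hU [hsrt [hpos [hsz [hlast [hmiss hsum]]]]]] :=
  Lam_props hL4 uU hUk ltac:(lia) ltac:(lia) hpair htrip ltac:(rewrite hL; exact: hext).
have srtA : sorted ltn (assoc_partition Y) := assoc_sorted yY.
have eqA : assoc_partition Y = Lam (size Y) Ue.
  apply: (irr_sorted_eq ltn_trans ltnn srtA hsrt) => x. rewrite memA memLam //; first by apply: leq_trans hL4.
  move=> u /hUk. lia.
rewrite eqA. split => //.
have dp : distinct_partition (Tnd n (n - 2 * k)) (Lam (size Y) Ue).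
  apply/and4P; split => //; last by rewrite hsz; clear -hL4; lia.
  apply/eqP. rewrite hsum. apply: (final_arith hn6 hk2 hL). rewrite szU. exact: hsig.
split; first split.
- by split.
- move=> s' hs'. rewrite hlast hL. have := maxU hk1 hk2 (erefl _) hs'.
  clear -hn6. lia.
- rewrite hmiss hlast. clear -hL4. lia.
Qed.
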